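(* Let $V$ be a finite-dimensional real vector space with preferred basis $(e_1,\dots,e_n)$, and let $X(V)=\bigoplus_{j,k} S^j(V)\otimes\Lambda_k(V)$ with the product and norm $\|\cdot\|$ described below. Then $\|\cdot\|$ is a norm on $X(V)$ and for all $A,B\in X(V)$, $$\|A\cdot B\|\le \|A\|\,\|B\|.$$
   Context: $S^j(V)$ is the $j$-th symmetric power and $\Lambda_k(V)$ the $k$-th exterior power of $V$. For a list $U=(u_1,\dots,u_j)$ of vectors write $\nabla^j_U=u_1u_2\cdots u_j\in S^j(V)$ (symmetric product), and for $W=(w_1,\dots,w_k)$ write $\alpha(W)=w_1\wedge\dots\wedge w_k$; write $\nabla^j_U\alpha$ for $\nabla^j_U\otimes\alpha$. The product on $X(V)$ is defined on such elements by $\nabla^{j_1}_{U_1}\alpha(W_1)\cdot\nabla^{j_2}_{U_2}\alpha(W_2)=\nabla^{j_1+j_2}_{(U_1,U_2)}\alpha(W_1,W_2)/2^{j_1+j_2}$ for $j_1,j_2\ge1$ (concatenated lists), as scalar multiplication if $j_1=0$ or $j_2=0$, and extended bilinearly. The inner product on $V$ declares $(e_i)$ orthonormal; $M(\alpha)$ is the mass of a simple $k$-vector. Define $\|\nabla^j_U\alpha\|_j=|u_1|\cdots|u_j|M(\alpha)$. The basis of $V$ generates a basis of $S^j(V)\otimes\Lambda_k(V)$; for $A^j=\sum_i a_i\nabla^j_{U_i}\alpha_i$ written in this basis set $\|A^j\|_j=\sum_i|a_i|\,\|\nabla^j_{U_i}\alpha_i\|_j$, and for $A=\sum_j A^j$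 (with $A^j$ the $S^j$-components) set $\|A\|=\sum_j\|A^j\|_j$. *)

(* Defs.v *)
From HB Require Import structures.
From mathcomp Require Import all_boot all_order all_algebra.
From mathcomp Require Import reals.
From mathcomp Require Import mpoly.
Set Implicit Arguments. Unset Strict Implicit. Unset Printing Implicit Defensive.
Import Order.TTheory GRing.Theory Num.Theory.
Local Open Scope ring_scope.

(* Model of X(V) = (+)_{j,k} S^j(V) (x) Lambda_k(V):
   S(V) = (+)_j S^j(V) is the polynomial algebra R[e_0,..,e_(n-1)]
   (the basis of S^j(V) generated by (e_i) = monomials of degree j),
   Lambda(V) = (+)_k Lambda_k(V) has basis e_I = e_(i1) /\ ... /\ e_(ik)
   for I = {i1 < ... < ik} a subset of 'I_n.  Hence an element of X(V) is
   the family (A_I)_I of S(V)-coefficients of the basis k-vectors e_I. *)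
Definition X (R : realType) (n : nat) := {ffun {set 'I_n} -> {mpoly R[n]}}.

Section XV.
Variables (R : realType) (n : nat).

(* The basis element  e^m (x) e_I  (monomial m, i.e. nabla^j_U with U the
   list of basis vectors listed with multiplicity m, and alpha = e_I). *)
Definition Xbasis (m : 'X_{1..n}) (I : {set 'I_n}) : X R n :=
  [ffun K => if K == I then 'X_[m] else 0].

(* sign of e_I /\ e_J = sign * e_(I :|: J) for disjoint I, J *)
Definition wedge_sign (I J : {set 'I_n}) : R :=
  (-1) ^+ #|[set p : 'I_n * 'I_n | [&& p.1 \in I, p.2 \in J & (p.2 < p.1)%N]]|.

(* scalar factor of the product of nabla^(j1) and nabla^(j2):
   1/2^(j1+j2) if j1, j2 >= 1, and 1 (scalar multiplication) otherwise *)
Definition sym_factor (m1 m2 : 'X_{1..n}) : R :=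
  if (0 < mdeg m1)%N && (0 < mdeg m2)%N then (2 ^+ (mdeg m1 + mdeg m2))^-1 else 1.

Definition Xbasis_mul (m1 : 'X_{1..n}) (I : {set 'I_n})
    (m2 : 'X_{1..n}) (J : {set 'I_n}) : X R n :=
  if [disjoint I & J] then
    (sym_factor m1 m2 * wedge_sign I J) *: Xbasis (mnm_add m1 m2) (I :|: J)
  else 0.

Definition Xmul (A B : X R n) : X R n :=
  \sum_(I : {set 'I_n}) \sum_(J : {set 'I_n})
    \sum_(m1 <- msupp (A I)) \sum_(m2 <- msupp (B J))
      ((A I)@_m1 * (B J)@_m2) *: Xbasis_mul m1 I m2 J.

(* ||nabla^j_U alpha||_j = |u_1|...|u_j| M(alpha) for a basis element *)
Definition basis_norm (m : 'X_{1..n}) (I : {set 'I_n}) : R :=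
  (\prod_(i < n) `|(1 : R)| ^+ (m i)) * 1.
(* (each |e_i| = 1 and M(e_I) = 1 since (e_i) is orthonormal) *)

(* ||A|| = sum_j ||A^j||_j = sum of |coefficient| * ||basis element|| *)
Definition Xnorm (A : X R n) : R :=
  \sum_(I : {set 'I_n}) \sum_(m <- msupp (A I)) `|(A I)@_m| * basis_norm m I.

End XV.

(* Main.v *)
Require Import Defs.
From HB Require Import structures.
From mathcomp Require Import all_boot all_order all_algebra.
From mathcomp Require Import reals.
From mathcomp Require Import mpoly.
Import Order.TTheory GRing.Theory Num.Theory.
Local Open Scope ring_scope.

Section Proofs.
Variables (R : realType) (n : nat).

Definition pn (p : {mpoly R[n]}) : R := \sum_(m <- msupp p) `|p@_m|.

Lemma pn_ge0 p : 0 <= pn p.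
Proof. by apply: sumr_ge0 => m _; exact: normr_ge0. Qed.

Lemma pn_sub p (s : seq 'X_{1..n}) : uniq s -> {subset msupp p <= s} ->
  pn p = \sum_(m <- s) `|p@_m|.
Proof.
move=> us sub; rewrite /pn [RHS](bigID (mem (msupp p))) /=.
rewrite [X in _ + X]big1 ?addr0; last first.
  by move=> m; rewrite -mcoeff_eq0 => /eqP ->; rewrite normr0.
rewrite -[RHS]big_filter; apply: perm_big; apply: uniq_perm.
- exact: msupp_uniq.
- exact: filter_uniq.
move=> m; rewrite mem_filter /=; apply/idP/idP.
  by move=> h; rewrite h sub.
by case/andP.
Qed.

Lemma pn0 : pn 0 = 0.
Proof. by rewrite /pn msupp0 big_nil. Qed.

Lemma pn_eq0 p : pn p = 0 -> p = 0.
Proof.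
rewrite /pn; case E: (msupp p) => [|m s]; first by move=> _; exact: msuppnil0.
rewrite big_cons => h; exfalso.
have hm : m \in msupp p by rewrite E inE eqxx.
have : 0 < `|p@_m| by rewrite normr_gt0 -mcoeff_msupp.
have : 0 <= \sum_(j <- s) `|p@_j| by apply: sumr_ge0 => j _; exact: normr_ge0.
move: h; set a := `|p@_m|; set b := \sum_(j <- s) _ => h h1 h2.
have : 0 < a + b by exact: ltr_wpDr.
by rewrite h ltxx.
Qed.

Lemma pnZ c p : pn (c *: p) = `|c| * pn p.
Proof.
rewrite (@pn_sub (c *: p) (msupp p)) ?msupp_uniq //; last exact: msuppZ_le.
rewrite /pn mulr_sumr; apply: eq_bigr => m _.
by rewrite mcoeffZ normrM.
Qed.

Lemma pnD p q : pn (p + q) <= pn p + pn q.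
Proof.
set s := undup (msupp p ++ msupp q).
have us : uniq s by exact: undup_uniq.
rewrite (@pn_sub (p + q) s) //; last first.
  by move=> m /msuppD_le; rewrite mem_undup.
rewrite (@pn_sub p s) //; last by move=> m h; rewrite mem_undup mem_cat h.
rewrite (@pn_sub q s) //; last by move=> m h; rewrite mem_undup mem_cat h orbT.
rewrite -big_split /=; apply: ler_sum => m _.
by rewrite mcoeffD; exact: ler_normD.
Qed.

Lemma XnormE (A : X R n) : Xnorm A = \sum_I pn (A I).
Proof.
apply: eq_bigr => I _; apply: eq_bigr => m _.
rewrite /basis_norm mulr1 big1 ?mulr1 // => i _.
by rewrite normr1 expr1n.
Qed.

Lemma Xnorm0 : Xnorm (0 : X R n) = 0.
Proof. by rewrite XnormE big1 // => I _; rewrite ffunE pn0. Qed.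

Lemma XnormD (A B : X R n) : Xnorm (A + B) <= Xnorm A + Xnorm B.
Proof.
rewrite !XnormE -big_split /=; apply: ler_sum => I _.
by rewrite ffunE; exact: pnD.
Qed.

Lemma XnormZ c (A : X R n) : Xnorm (c *: A) = `|c| * Xnorm A.
Proof.
rewrite !XnormE mulr_sumr; apply: eq_bigr => I _.
by rewrite ffunE pnZ.
Qed.

Lemma Xnorm_sum (T : Type) (r : seq T) (F : T -> X R n) :
  Xnorm (\sum_(i <- r) F i) <= \sum_(i <- r) Xnorm (F i).
Proof.
elim: r => [|x r IH]; first by rewrite !big_nil Xnorm0.
rewrite !big_cons; apply: le_trans (XnormD _ _) _.
exact: lerD.
Qed.

Lemma Xnorm_basis m K : Xnorm (@Xbasis R n m K) = 1.
Proof.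
rewrite XnormE (bigD1 K) //= big1 ?addr0.
  by rewrite ffunE eqxx /pn msuppX big_seq1 mcoeffX eqxx normr1.
by move=> I /negbTE h; rewrite ffunE h pn0.
Qed.

Lemma Xnorm_basis_mul m1 I m2 J : Xnorm (@Xbasis_mul R n m1 I m2 J) <= 1.
Proof.
rewrite /Xbasis_mul; case: ifP => _; last by rewrite Xnorm0.
rewrite XnormZ Xnorm_basis mulr1 normrM /wedge_sign normrX normrN1 expr1n mulr1.
rewrite /sym_factor; case: ifP => _; last by rewrite normr1.
have h1 : (1 : R) <= 2 ^+ (mdeg m1 + mdeg m2) by apply: exprn_ege1; rewrite ler1n.
have h0 : (0 : R) < 2 ^+ (mdeg m1 + mdeg m2) by apply: lt_le_trans h1.
by rewrite ger0_norm ?invr_ge0 ?(ltW h0) // invf_le1.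
Qed.

Lemma XnormM (A B : X R n) : Xnorm (Xmul A B) <= Xnorm A * Xnorm B.
Proof.
rewrite /Xmul.
apply: le_trans (Xnorm_sum _ _ _) _.
apply: (@le_trans _ _ (\sum_I \sum_J \sum_(m1 <- msupp (A I))
   \sum_(m2 <- msupp (B J)) `|(A I)@_m1 * (B J)@_m2|)).
  apply: ler_sum => I _; apply: le_trans (Xnorm_sum _ _ _) _.
  apply: ler_sum => J _; apply: le_trans (Xnorm_sum _ _ _) _.
  apply: ler_sum => m1 _; apply: le_trans (Xnorm_sum _ _ _) _.
  apply: ler_sum => m2 _; rewrite XnormZ.
  by rewrite -[X in _ <= X]mulr1; apply: ler_wpM2l => //; exact: Xnorm_basis_mul.
rewrite !XnormE big_distrl /=; apply: ler_sum => I _.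
rewrite big_distrr /=; apply: ler_sum => J _.
rewrite /pn big_distrl /=; apply: ler_sum => m1 _.
rewrite big_distrr /=; apply: ler_sum => m2 _.
by rewrite normrM.
Qed.

End Proofs.

Theorem mainTheorem1 (R : realType) (n : nat) :
  [/\ (forall A : X R n, Xnorm A = 0 <-> A = 0),
      (forall (c : R) (A : X R n), Xnorm (c *: A) = `|c| * Xnorm A),
      (forall A B : X R n, Xnorm (A + B) <= Xnorm A + Xnorm B)
    & (forall A B : X R n, Xnorm (Xmul A B) <= Xnorm A * Xnorm B)].
Proof.
split.
- move=> A; split; last by move=> ->; exact: Xnorm0.
  rewrite XnormE => h; apply/ffunP => I; rewrite ffunE; apply: pn_eq0.
  by apply: (psumr_eq0P _ h) => // J _; exact: pn_ge0.
- exact: XnormZ.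
- exact: XnormD.
- exact: XnormM.
Qed.
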